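(* Let $\mathbb{F}$ be a field and $n\ge 0$ an integer with $|\mathbb{F}| \geq 2n-1$. Let $V$ be an $\mathbb{F}$-vector space of dimension $2n$, and let $s$ be a symplectic form on $V$. Let $\mathcal{S}$ be a linear subspace of $\mathcal{A}_s$ that has trivial spectrum. Then $\dim \mathcal{S} \leq n(n-1)$.
   Context: A bilinear form $b$ on $V$ is alternating if $b(x,x)=0$ for all $x\in V$, and symplectic if it is alternating and non-degenerate. $\mathcal{A}_s$ denotes the space of all $s$-alternating endomorphisms of $V$, i.e. endomorphisms $u$ of $V$ such that $s(x,u(x))=0$ for all $x\in V$. An endomorphism $u$ has trivial spectrum if it has no nonzero eigenvalue in $\mathbb{F}$; a linear subspace of endomorphisms has trivial spectrum if all its elements have trivial spectrum. The field $\mathbb{F}$ may have any characteristic, including 2. *)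

(* Defs.v *)
From HB Require Import structures.
From mathcomp Require Import all_boot all_order all_algebra.
From mathcomp Require Import vector.
Set Implicit Arguments. Unset Strict Implicit. Unset Printing Implicit Defensive.
Import GRing.Theory.
Local Open Scope ring_scope.

Definition bilinear_form (F : fieldType) (V : vectType F) (b : V -> V -> F) : Prop :=
  (forall (a : F) (x y z : V), b (a *: x + y) z = a * b x z + b y z) /\
  (forall (a : F) (x y z : V), b x (a *: y + z) = a * b x y + b x z).

Definition alternating_form (F : fieldType) (V : vectType F) (b : V -> V -> F) : Prop :=
  bilinear_form b /\ forall x : V, b x x = 0.

Definition nondegenerate_form (F : fieldType) (V : vectType F) (b : V -> V -> F) : Prop :=
  forall x : V, (forall y : V, b x y = 0) -> x = 0.

Definition symplectic_form (F : fieldType) (V : vectType F) (b : V -> V -> F) : Prop :=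
  alternating_form b /\ nondegenerate_form b.

(* u is s-alternating: s(x, u x) = 0 for all x  (u in A_s) *)
Definition s_alternating (F : fieldType) (V : vectType F) (s : V -> V -> F)
  (u : 'End(V)) : Prop := forall x : V, s x (u x) = 0.

Definition trivial_spectrum (F : fieldType) (V : vectType F) (u : 'End(V)) : Prop :=
  forall a : F, a != 0 -> ~~ passmx.leigenvalue u a.

Definition card_at_least (F : fieldType) (k : nat) : Prop :=
  exists l : seq F, uniq l /\ (k <= size l)%N.

(* Main.v *)
Require Import Defs.
From HB Require Import structures.
From mathcomp Require Import all_boot all_order all_algebra.
From mathcomp Require Import vector.
From mathcomp Require Import zify.
Set Implicit Arguments. Unset Strict Implicit. Unset Printing Implicit Defensive.
Import GRing.Theory.
Local Open Scope ring_scope.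

Definition lin_of (F : fieldType) (U W : lmodType F) (f : U -> W) (hf : linear f) : {linear U -> W} :=
  HB.pack f (GRing.isSemilinear.Build F U W _ f (GRing.semilinear_linear hf)).

Lemma lin_ofE (F : fieldType) (U W : vectType F) (f : U -> W) (hf : linear f) x :
  linfun (lin_of hf) x = f x.
Proof. by rewrite lfunE. Qed.

Section Form.
Variables (F : fieldType) (V : vectType F) (s : V -> V -> F).
Hypothesis hb : bilinear_form s.

Lemma s0l z : s 0 z = 0.
Proof.
have h := hb.1 1 0 0 z; rewrite scale1r addr0 mul1r in h.
by apply/(addrI (s 0 z)); rewrite addr0 -h.
Qed.
Lemma s0r z : s z 0 = 0.
Proof.
have h := hb.2 1 z 0 0; rewrite scale1r addr0 mul1r in h.
by apply/(addrI (s z 0)); rewrite addr0 -h.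
Qed.
Lemma sDl x y z : s (x + y) z = s x z + s y z.
Proof. by have := hb.1 1 x y z; rewrite scale1r mul1r. Qed.
Lemma sDr x y z : s z (x + y) = s z x + s z y.
Proof. by have := hb.2 1 z x y; rewrite scale1r mul1r. Qed.
Lemma sZl a x z : s (a *: x) z = a * s x z.
Proof. by have := hb.1 a x 0 z; rewrite addr0 s0l addr0. Qed.
Lemma sZr a x z : s z (a *: x) = a * s z x.
Proof. by have := hb.2 a z x 0; rewrite addr0 s0r addr0. Qed.
Lemma sNl x z : s (- x) z = - s x z.
Proof. by rewrite -scaleN1r sZl mulN1r. Qed.
Lemma sNr x z : s z (- x) = - s z x.
Proof. by rewrite -scaleN1r sZr mulN1r. Qed.
Lemma sBl x y z : s (x - y) z = s x z - s y z.
Proof. by rewrite sDl sNl. Qed.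
Lemma sBr x y z : s z (x - y) = s z x - s z y.
Proof. by rewrite sDr sNr. Qed.
Lemma s_suml I (r : seq I) (P : pred I) (f : I -> V) z :
  s (\sum_(i <- r | P i) f i) z = \sum_(i <- r | P i) s (f i) z.
Proof. exact: (big_morph (s^~ z) (fun x y => sDl x y z) (s0l z)). Qed.
Lemma s_sumr I (r : seq I) (P : pred I) (f : I -> V) z :
  s z (\sum_(i <- r | P i) f i) = \sum_(i <- r | P i) s z (f i).
Proof. exact: (big_morph (s z) (fun x y => sDr x y z) (s0r z)). Qed.

Lemma sl_lin z : linear (fun x : V => (s x z : F^o)).
Proof. by move=> a x y; rewrite sDl sZl. Qed.
Lemma sr_lin z : linear (fun x : V => (s z x : F^o)).
Proof. by move=> a x y; rewrite sDr sZr. Qed.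

Hypothesis halt : forall x, s x x = 0.
Lemma s_skew x y : s x y = - s y x.
Proof.
have := halt (x + y); rewrite sDl !sDr !halt add0r addr0 => /eqP.
by rewrite addr_eq0 => /eqP.
Qed.

Hypothesis hnd : nondegenerate_form s.
Lemma ndr x : (forall y, s y x = 0) -> x = 0.
Proof. by move=> h; apply: hnd => y; rewrite s_skew h oppr0. Qed.

Lemma ortho_dim (U1 U2 : {vspace V}) :
  (forall a b, a \in U1 -> b \in U2 -> s a b = 0) ->
  (\dim U1 + \dim U2 <= \dim {:V})%N.
Proof.
move=> hU.
pose iota_ (w : V) : 'Hom(V, F^o) := linfun (lin_of (sl_lin w)).
have iota_lin : linear iota_.
  move=> a w1 w2; apply/lfunP => y.
  by rewrite /iota_ !lfun_simp /= sDr sZr.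
pose io := linfun (lin_of iota_lin).
have ioE w y : io w y = s y w by rewrite lin_ofE /iota_ lin_ofE.
have kio : (fullv :&: lker io = 0)%VS.
  apply/eqP; rewrite -subv0; apply/subvP => w; rewrite memv_cap memv_ker memv0.
  case/andP=> _ /eqP hw; apply/eqP; apply: ndr => y.
  by rewrite -ioE hw lfunE.
have limgio : limg io = fullv.
  apply/eqP; rewrite eqEdim subvf /= limg_dim_eq //.
  by rewrite !dimvf; change (dim V * 1 <= dim V)%N; rewrite muln1.
pose rho_ (w : V) : 'Hom(subvs_of U1, F^o) :=
  linfun (lin_of (sl_lin w) \o vsval).
have rho_lin : linear rho_.
  move=> a w1 w2; apply/lfunP => y.
  by rewrite /rho_ !lfun_simp /= sDr sZr.
pose rho := linfun (lin_of rho_lin).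
have rhoE w y : rho w y = s (vsval y) w by rewrite lin_ofE /rho_ lfunE.
have limgrho : \dim (limg rho) = \dim U1.
  have -> : limg rho = fullv.
    apply/eqP; rewrite eqEdim subvf /=; apply: dimvS; apply/subvP => g _.
    have : (g \o linfun (vsproj U1))%VF \in limg io by rewrite limgio memvf.
    case/memv_imgP => w _ hw.
    have -> : g = rho w.
      apply/lfunP => y; rewrite rhoE -ioE -hw comp_lfunE lfunE /= vsvalK //.
    exact: memv_img (memvf _).
  by rewrite dimvf; change (\dim U1 * 1 = \dim U1)%N; rewrite muln1.
have := limg_ker_dim rho fullv; rewrite capfv limgrho => <-.
rewrite addnC leq_add2r; apply: dimvS; apply/subvP => b hb2.
rewrite memv_ker; apply/eqP/lfunP => y; rewrite rhoE lfunE /=.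
by apply: hU => //; apply: subvsP.
Qed.

End Form.

From Stdlib Require Import Classical_Prop.
Set Implicit Arguments. Unset Strict Implicit. Unset Printing Implicit Defensive.
Import GRing.Theory.
Local Open Scope ring_scope.

Fixpoint Ppoly (F : fieldType) (g : nat -> F) (j : nat) : {poly F} :=
  if j is j'.+1 then 'X * Ppoly g j' + (g j')%:P else 0.

Lemma coefP (F : fieldType) (g : nat -> F) j i :
  (Ppoly g j)`_i = if (i < j)%N then g (j - i.+1)%N else 0.
Proof.
elim: j i => [|j IHj] i /=; first by rewrite coef0.
rewrite coefD coefXM coefC; case: i => [|i] /=.
  by rewrite add0r subn1.
by rewrite IHj addr0 ltnS subSS.
Qed.

Fixpoint Rvec (F : fieldType) (V : vectType F) (l : F) (kk : nat -> V) j : V :=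
  if j is j'.+1 then l *: Rvec l kk j' + kk j' else 0.

Lemma sum_single (M : zmodType) N (D : 'I_N) (f : 'I_N -> M) :
  (forall j, j != D -> f j = 0) -> \sum_(j < N) f j = f D.
Proof. by move=> h; rewrite (bigD1 D) //= big1 ?addr0. Qed.

Section LF.
Variables (F : fieldType) (V1 V2 : vectType F) (f : 'Hom(V1, V2)).
Lemma lfZ a y : f (a *: y) = a *: f y. Proof. exact: linearZ. Qed.
Lemma lfD y1 y2 : f (y1 + y2) = f y1 + f y2. Proof. exact: linearD. Qed.
Lemma lfB y1 y2 : f (y1 - y2) = f y1 - f y2. Proof. exact: linearB. Qed.
Lemma lf0 : f 0 = 0. Proof. exact: linear0. Qed.
End LF.

Section Step.
Variables (F : fieldType) (m : nat) (V : vectType F) (s : V -> V -> F)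
  (S : {vspace 'End(V)}).
Hypothesis hF : card_at_least F (2 * m.+1 - 1).
Hypothesis hV : \dim (fullv : {vspace V}) = (2 * m.+1)%N.
Hypothesis hs : symplectic_form s.
Hypothesis hSA : forall u, u \in S -> s_alternating s u.
Hypothesis hST : forall u, u \in S -> trivial_spectrum u.

Let hb : bilinear_form s := proj1 (proj1 hs).
Let halt : forall x, s x x = 0 := proj2 (proj1 hs).
Let hnd : nondegenerate_form s := proj2 hs.
Let sE := (s0l hb, s0r hb, sDl hb, sDr hb, sZl hb, sZr hb, sNl hb, sNr hb, sBl hb, sBr hb).
Let skw := s_skew hb halt.

Lemma eig0 u b l : u \in S -> l != 0 -> u b = l *: b -> b = 0.
Proof.
move=> Su hl hub; have := hST Su hl; rewrite /passmx.leigenvalue negbK => /eqP h0.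
have : b \in passmx.leigenspace u l.
  by rewrite /passmx.leigenspace memv_ker !lfun_simp /= hub subrr.
by rewrite h0 memv0 => /eqP.
Qed.

Lemma sadj u a b : u \in S -> s a (u b) = s (u a) b.
Proof.
move=> Su; have := hSA Su (a + b); rewrite linearD /= !sE (hSA Su a) (hSA Su b).
rewrite add0r addr0 => /eqP; rewrite addr_eq0 => /eqP ->.
by rewrite (skw (u a)).
Qed.

Lemma sadj_iter u j a b : u \in S -> s a (iter j u b) = s (iter j u a) b.
Proof.
move=> Su; elim: j a => [|j IHj] a //=.
by rewrite sadj // IHj -iterSr.
Qed.

Lemma salt_iter u j a : u \in S -> s a (iter j u a) = 0.
Proof.
move=> Su; have e : j = (j./2 + (odd j + j./2))%N.
  by rewrite addnCA addnn odd_double_half.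
rewrite e iterD sadj_iter // iterD; case: (odd j) => /=.
  exact: (hSA Su).
exact: halt.
Qed.

Lemma poly_lemma u x w : u \in S -> s x w = 0 ->
  (forall l a, l != 0 -> l *: a - u a = w -> s x a = 0) -> s x (u w) = 0.
Proof.
move=> Su hxw heig.
have uD y1 y2 : u (y1 + y2) = u y1 + u y2 by rewrite linearD.
have uZ (c : F) y : u (c *: y) = c *: u y by rewrite linearZ.
have u0 : u 0 = 0 by rewrite linear0.
have uS (f : 'I_(2 * m.+1) -> V) : u (\sum_(j < 2 * m.+1) f j) = \sum_(j < 2 * m.+1) u (f j).
  exact: (big_morph (fun_of_lfun u) uD u0).
case: (eqVneq w 0) => [->|wn0]; first by rewrite linear0 sE.
pose N := (2 * m.+1)%N.
pose k j := iter j u w.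
pose X := [tuple k i | i < N].
have Xk (i : 'I_N) : X`_i = k i by rewrite nth_mktuple.
have nfree : ~~ free X.
  apply/negP => fX.
  have spX : <<X>>%VS = fullv.
    apply/eqP; rewrite eqEdim subvf /= hV.
    by move: fX; rewrite /free size_tuple => /eqP ->.
  have : (fullv <= lker (linfun (lin_of (sr_lin hb w))))%VS.
    rewrite -spX; apply/span_subvP => y /(nthP 0) [i]; rewrite size_tuple => ltiN <-.
    rewrite (Xk (Ordinal ltiN)) memv_ker lin_ofE /=.
    by rewrite /k salt_iter.
  move/subvP => hall; move/eqP: wn0; apply; apply: hnd => y.
  by have := hall y (memvf y); rewrite memv_ker lin_ofE => /eqP.
have [r [hr [i0 hi0]]] : exists r : 'I_N -> F,
    \sum_(i < N) r i *: X`_i = 0 /\ exists i, r i != 0.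
  apply: NNPP => hn; apply: (negP nfree); apply/freeP => r hr i.
  case: (eqVneq (r i) 0) => // hri; exfalso; apply: hn; exists r; split => //.
  by exists i.
have hr' : \sum_(i < N) r i *: k i = 0.
  by rewrite -[RHS]hr; apply: eq_bigr => i _; rewrite Xk.
have [D hD hmax] : exists2 D : 'I_N, r D != 0 & forall j : 'I_N, r j != 0 -> (j <= D)%N.
  case: (@arg_maxnP _ i0 (fun i => r i != 0) (fun i : 'I_N => nat_of_ord i) hi0) => D hD hmax.
  by exists D => // j /hmax.
pose g j := s x (k j).
have g0 : g 0%N = 0 by [].
pose h := \sum_(j < N) r j *: Ppoly g j.
have hcoef i : h`_i = \sum_(j < N) r j * (if (i < j)%N then g (j - i.+1)%N else 0).
  by rewrite coef_sum; apply: eq_bigr => j _; rewrite coefZ coefP.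
have relR l j : l *: Rvec l k j - u (Rvec l k j) = l ^+ j *: w - k j.
  elim: j => [|j IHj] /=; first by rewrite !linear0 expr0 scale1r subrr addr0.
  rewrite /= exprS -scalerA.
  have -> : l ^+ j *: w = (l *: Rvec l k j - u (Rvec l k j)) + k j by rewrite IHj subrK.
  rewrite uD uZ !scalerDr scalerN opprD !addrA.
  congr (_ - _); exact: addrAC.
have hornR l j : (Ppoly g j).[l] = s x (Rvec l k j).
  elim: j => [|j IHj] /=; first by rewrite horner0 sE.
  by rewrite hornerD hornerC mulrC hornerMX IHj !sE mulrC.
have hroot l : l != 0 -> h.[l] = 0.
  move=> hl.
  pose A := \sum_(j < N) r j *: Rvec l k j.
  have hA : h.[l] = s x A.
    rewrite horner_sum /A (s_sumr hb); apply: eq_bigr => j _.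
    by rewrite hornerZ hornR sE.
  have relA : l *: A - u A = (\sum_(j < N) r j * l ^+ j) *: w.
    have -> : l *: A - u A = \sum_(j < N) (r j *: (l ^+ j *: w - k j)).
      rewrite /A scaler_sumr uS -sumrB; apply: eq_bigr => j _.
      by rewrite uZ scalerA mulrC -scalerA -scalerBr relR.
    rewrite (eq_bigr (fun j => (r j * l ^+ j) *: w - r j *: k j)); last first.
      by move=> j _; rewrite scalerBr scalerA.
    by rewrite sumrB hr' subr0 scaler_suml.
  case: (eqVneq (\sum_(j < N) r j * l ^+ j) 0) => hrho.
    rewrite hA; have -> : A = 0; last by rewrite sE.
    apply: (eig0 Su hl); move/eqP: relA; rewrite hrho scale0r subr_eq0 => /eqP <-.
    by [].
  have := heig l ((\sum_(j < N) r j * l ^+ j)^-1 *: A) hl.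
  rewrite uZ scalerA [l * _]mulrC -scalerA -scalerBr relA scalerA mulVf // scale1r.
  move=> /(_ erefl) hx0.
  by rewrite hA -(scalerKV hrho A) sE hx0 mulr0.
case: hF => l0 [ul0 sl0].
pose rs := [seq a <- l0 | a != 0].
have urs : uniq rs := filter_uniq _ ul0.
have srs : (2 * m <= size rs)%N.
  have := count_predC (fun a : F => a != 0) l0.
  have : (count (predC (fun a : F => a != 0%R)) l0 <= 1)%N.
    rewrite (@eq_count _ _ (pred1 (0 : F))); last by move=> a /=; rewrite negbK.
    by rewrite count_uniq_mem // leq_b1.
  rewrite /rs size_filter => h1 h2; rewrite -h2 in sl0.
  move: h1 sl0; set c1 := count _ l0; set c2 := count _ l0; lia.
have h0 : h = 0.
  apply/eqP; apply: contraT => hn.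
  have hall : all (root h) rs.
    apply/allP => a; rewrite mem_filter => /andP[ha _].
    by rewrite /root hroot.
  have hlt := max_poly_roots hn hall urs.
  have : (size h <= D.-1)%N.
    apply/leq_sizeP => i hi; rewrite hcoef big1 // => j _.
    case: (eqVneq (r j) 0) => [->|/hmax hj]; first by rewrite mul0r.
    case: ifP => hij; last by rewrite mulr0.
    have -> : (j - i.+1 = 0)%N by lia.
    by rewrite g0 mulr0.
  move: hlt srs (ltn_ord D); rewrite /N; set a1 := size rs; set a2 := size h; set a3 := nat_of_ord D; lia.
have -> : s x (u w) = g 1%N by [].
have Dle (j : 'I_N) : j != D -> r j != 0 -> (j < D)%N.
  move=> hjD /hmax; rewrite leq_eqVlt => /orP[/eqP hh|//].
  by move/eqP: hjD; case; apply: val_inj.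
case E: (nat_of_ord D) => [|[|d]].
- have := hr'; rewrite (@sum_single _ _ D); last first.
    move=> j hj; case: (eqVneq (r j) 0) => [->|hrj]; first by rewrite scale0r.
    by have := Dle j hj hrj; rewrite E.
  move/eqP; rewrite scaler_eq0 (negPf hD) /= /k E /= => /eqP w0.
  by move/eqP: wn0.
- have := congr1 (s x) hr'; rewrite (s_sumr hb) sE (@sum_single _ _ D); last first.
    move=> j hj; case: (eqVneq (r j) 0) => [->|hrj]; first by rewrite sE mul0r.
    have := Dle j hj hrj; rewrite E ltnS leqn0 => /eqP ej.
    by rewrite sE /k ej /= hxw mulr0.
  rewrite sE E => /eqP; rewrite mulf_eq0 (negPf hD) /= => /eqP.
  by [].
- have := hcoef (D - 2)%N; rewrite h0 coef0 (@sum_single _ _ D); last first.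
    move=> j hj; case: (eqVneq (r j) 0) => [->|hrj]; first by rewrite mul0r.
    have := Dle j hj hrj => hjD.
    case: ifP => hij; last by rewrite mulr0.
    have -> : (j - (D - 2).+1 = 0)%N by lia.
    by rewrite g0 mulr0.
  have -> : ((D - 2) < D)%N by lia.
  have -> : (D - (D - 2).+1 = 1)%N by lia.
  move/esym/eqP; rewrite mulf_eq0 (negPf hD) /= => /eqP.
  by [].
Qed.


Section XZ.
Hypothesis IH : forall (W' : vectType F) (t : W' -> W' -> F) (T : {vspace 'End(W')}),
  card_at_least F (2 * m - 1) -> \dim (fullv : {vspace W'}) = (2 * m)%N ->
  symplectic_form t -> (forall u, u \in T -> s_alternating t u) ->
  (forall u, u \in T -> trivial_spectrum u) -> (\dim T <= m * (m - 1))%N.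
Variables (x z : V).
Hypothesis hx0 : x != 0.
Hypothesis hxz : s x z = 1.

Lemma szx : s z x = -1.
Proof. by rewrite skw hxz. Qed.

Lemma p_lin : linear (fun y : V => s x y *: z - s z y *: x).
Proof.
move=> a y1 y2; rewrite !sE !scalerDl -!scalerA scalerBr opprD !addrA.
congr (_ - _); exact: addrAC.
Qed.

Let p := linfun (lin_of p_lin).
Lemma pE y : p y = s x y *: z - s z y *: x.
Proof. by rewrite lin_ofE. Qed.

Lemma sx_p y : s x (p y) = s x y.
Proof. by rewrite pE !sE hxz halt !mulr0 subr0 mulr1. Qed.
Lemma sz_p y : s z (p y) = s z y.
Proof. by rewrite pE !sE szx halt mulr0 sub0r mulrN1 opprK. Qed.

Let C := lker p.
Lemma inC c : (c \in C) = (s x c == 0) && (s z c == 0).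
Proof.
rewrite memv_ker; apply/idP/idP.
  move=> /eqP hc; rewrite -sx_p -sz_p hc !sE eqxx //.
by case/andP => /eqP h1 /eqP h2; rewrite pE h1 h2 !scale0r subrr.
Qed.

Lemma yminp y : y - p y \in C.
Proof. by rewrite inC !sE sx_p sz_p !subrr eqxx. Qed.

Lemma dimC : \dim C = (2 * m)%N.
Proof.
have := limg_ker_dim p fullv; rewrite capfv hV.
suff -> : \dim (limg p) = 2%N by rewrite /C; lia.
have fxz : free [:: x; z].
  rewrite free_cons seq1_free span_seq1; apply/andP; split.
    apply/vlineP => [[a ha]]; move: hxz; rewrite ha !sE halt mulr0 => /eqP.
    by rewrite eq_sym oner_eq0.
  apply/eqP => z0; move: hxz; rewrite z0 sE => /eqP; by rewrite eq_sym oner_eq0.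
apply/eqP; rewrite eqn_leq; apply/andP; split.
  apply: (leq_trans (dimvS _) (dim_span [:: x; z])).
  apply/subvP => y /memv_imgP [y' _ ->]; rewrite pE.
  by apply: rpredB; apply: rpredZ; apply: memv_span; rewrite !inE eqxx ?orbT.
move: fxz; rewrite /free /= => /eqP <-; apply: dimvS; apply/span_subvP => y.
rewrite !inE => /orP [] /eqP ->.
  have <- : p x = x by rewrite pE halt szx scale0r sub0r scaleN1r opprK.
  exact: memv_img (memvf _).
have <- : p z = z by rewrite pE hxz halt scale0r subr0 scale1r.
exact: memv_img (memvf _).
Qed.

Local Notation W := (subvs_of C).
Let t (a b : W) := s (vsval a) (vsval b).

Lemma t_sympl : symplectic_form t.
Proof.
split; [split; [split|] |].
- by move=> a c1 c2 c3; rewrite /t linearP /= !sE.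
- by move=> a c1 c2 c3; rewrite /t linearP /= !sE.
- by move=> c; exact: halt.
move=> c hc; apply: subvs_inj; rewrite linear0; apply: hnd => y.
move: (subvsP c); rewrite inC => /andP[/eqP h1 /eqP h2].
rewrite -(subrK (p y) y) sE.
have := hc (vsproj C (y - p y)); rewrite /t vsprojK ?yminp // => ->.
by rewrite pE !sE (skw _ z) (skw _ x) h1 h2 oppr0 !mulr0 subrr add0r.
Qed.

Lemma dimW : \dim (fullv : {vspace W}) = (2 * m)%N.
Proof. by rewrite dimvf; exact: dimC. Qed.

Lemma psi_lin (u : 'End(V)) : linear (fun c : W => vsproj C (u (vsval c) - p (u (vsval c)))).
Proof.
move=> a c1 c2.
have hu : u (vsval (a *: c1 + c2)) = a *: u (vsval c1) + u (vsval c2) by rewrite !linearP.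
have hp y1 y2 : p (a *: y1 + y2) = a *: p y1 + p y2 by rewrite linearP.
rewrite hu hp -[RHS]linearP /=; congr (vsproj C _).
by rewrite scalerBr opprD addrACA.
Qed.

Let psi0 u : 'End(W) := linfun (lin_of (psi_lin u)).
Lemma psiE u c : vsval (psi0 u c) = u (vsval c) - p (u (vsval c)).
Proof. by rewrite lin_ofE vsprojK // yminp. Qed.

Lemma Psi_lin : linear psi0.
Proof.
move=> a u1 u2; apply/lfunP => c; apply: subvs_inj.
have hp y1 y2 : p (a *: y1 + y2) = a *: p y1 + p y2 by rewrite linearP.
rewrite !lfun_simp /= !vsprojK ?yminp // !lfun_simp /= -!pE hp.
by rewrite scalerBr opprD addrACA.
Qed.
Let Psi := linfun (lin_of Psi_lin).
Lemma PsiE u : Psi u = psi0 u.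
Proof. by rewrite lin_ofE. Qed.

Lemma ev_lin (y : V) : linear (fun u : 'End(V) => u y).
Proof. by move=> a u1 u2; rewrite !lfun_simp. Qed.
Let Phi := linfun (lin_of (ev_lin x)).
Let Theta := linfun (lin_of (ev_lin z)).

Lemma step : (\dim S <= m.+1 * (m.+1 - 1))%N.
Proof.
pose K := (S :&: lker Phi)%VS.
have memK u : (u \in K) = (u \in S) && (u x == 0) by rewrite memv_cap memv_ker lin_ofE.
pose K0 := (K :&: lker Psi)%VS.
have memK0 v : v \in K0 -> [/\ v \in S, v x = 0 & forall c, c \in C -> v c = p (v c)].
  rewrite memv_cap memK memv_ker PsiE => /andP[/andP[vS /eqP vx] /eqP hv]; split => // c cC.
  have := psiE v (vsproj C c); rewrite hv zero_lfunE linear0 (vsprojK cC).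
  by move/eqP; rewrite eq_sym subr_eq0 => /eqP.
have vform v b : v \in K0 -> v b = s x b *: v z - s (v z) b *: x.
  case/memK0 => vS vx vC.
  have wz : s (v z) z = 0 by rewrite -sadj // (hSA vS).
  have wx : s (v z) x = 0 by rewrite -sadj // vx sE.
  have cC := yminp b.
  have vc : v (b - p b) = - s (v z) (b - p b) *: x.
    rewrite vC // pE (sadj x (b - p b) vS) vx sE scale0r sub0r (sadj z (b - p b) vS).
    by rewrite scaleNr.
  rewrite -{1}(subrK (p b) b) lfD vc pE lfB !lfZ vx scaler0 subr0.
  rewrite -{2}(subrK (p b) b) (sDr hb) pE !sE wz wx !mulr0 subrr.
  by rewrite subr0 scaleNr addrC.
have key u v : u \in S -> v \in K0 -> s x (u (v z)) = 0.
  move=> uS vK0; have [vS vx _] := memK0 v vK0.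
  apply: (poly_lemma uS); first by rewrite sadj // vx sE.
  move=> l a hl E.
  case: (eqVneq (s x a) 0) => // hg; exfalso.
  have wa : s (v z) a = 0.
    by rewrite -E !sE halt mulr0 sub0r (skw (u a) a) (hSA uS a) !oppr0.
  have va : v a = s x a *: v z by rewrite vform // wa scale0r subr0.
  have fS : u + (s x a)^-1 *: v \in S by rewrite rpredD // rpredZ.
  have := eig0 (b := (s x a)^-1 *: a) (l := l) fS hl.
  have -> : (u + (s x a)^-1 *: v) ((s x a)^-1 *: a) = l *: ((s x a)^-1 *: a).
    rewrite !lfun_simp /= !lfZ va !scalerA -mulrA mulVf // mulr1 -scalerDr -E.
    by rewrite addrC subrK scalerA mulrC -scalerA.
  move=> /(_ erefl) /eqP; rewrite scaler_eq0 invr_eq0 (negPf hg) /= => /eqP a0.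
  by move: hg; rewrite a0 sE eqxx.
have e1 : (\dim K + \dim (Phi @: S))%N = \dim S := limg_ker_dim Phi S.
have e2 : (\dim K0 + \dim (Psi @: K))%N = \dim K := limg_ker_dim Psi K.
have e3 : \dim (Theta @: K0) = \dim K0.
  apply: limg_dim_eq; apply/eqP; rewrite -subv0; apply/subvP => v.
  rewrite memv_cap memv_ker lin_ofE memv0 => /andP [vK0 /eqP vz].
  by apply/eqP/lfunP => b; rewrite vform // vz !sE scaler0 scale0r subr0 zero_lfunE.
have hIH : (\dim (Psi @: K) <= m * (m - 1))%N.
  apply: (@IH _ t _ _ dimW t_sympl).
  - by case: hF => l0 [u0 s0]; exists l0; split => //; lia.
  - move=> ub /memv_imgP [u uK ->] c; rewrite PsiE /t psiE.
    move: (subvsP c); rewrite inC => /andP[/eqP h1 /eqP h2].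
    move: uK; rewrite memK => /andP[uS _].
    rewrite (sBr hb) (hSA uS (vsval c)) pE !sE (skw _ z) (skw _ x) h1 h2 oppr0 !mulr0.
    by rewrite !subrr.
  move=> ub /memv_imgP [u uK ->] l hl; rewrite PsiE /passmx.leigenvalue negbK.
  move: uK; rewrite memK => /andP[uS /eqP ux].
  apply/eqP; case: (eqVneq (passmx.leigenspace (psi0 u) l) 0%VS) => // hne; exfalso.
  set c := vpick (passmx.leigenspace (psi0 u) l).
  have cn0 : c != 0 by rewrite vpick0.
  have := memv_pick (passmx.leigenspace (psi0 u) l).
  rewrite -/c /passmx.leigenspace memv_ker !lfun_simp /= subr_eq0 => /eqP hc.
  have hc' : u (vsval c) - p (u (vsval c)) = l *: vsval c.
    by move/(congr1 vsval): hc; rewrite vsprojK ?yminp // linearZ.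
  set c0 := vsval c in hc'.
  have sxu : s x (u c0) = 0 by rewrite sadj // ux sE.
  rewrite pE sxu scale0r sub0r opprK in hc'.
  move: hc'; set mu := s z (u c0) => hc'.
  have huc : u c0 = l *: c0 - mu *: x by rewrite -hc' addrK.
  have := eig0 (b := c0 - (mu / l) *: x) uS hl.
  have -> : u (c0 - (mu / l) *: x) = l *: (c0 - (mu / l) *: x).
    by rewrite lfB lfZ ux scaler0 subr0 huc scalerBr scalerA mulrCA mulfV // mulr1.
  move=> /(_ erefl) /eqP; rewrite subr_eq0 => /eqP hc0.
  move: (subvsP c); rewrite -/c0 inC => /andP[_ /eqP h2].
  move: h2; rewrite hc0 sE szx mulrN1 => /eqP; rewrite oppr_eq0 => /eqP h0.
  move: hc0; rewrite h0 scale0r => c00.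
  by move: cn0; rewrite -(inj_eq subvs_inj) -/c0 c00 linear0 eqxx.
have dx : \dim <[x]> = 1%N by rewrite dim_vline hx0.
have e4 : \dim (Phi @: S + <[x]>) = (\dim (Phi @: S) + 1)%N.
  have := dimv_sum_cap (Phi @: S) <[x]>; rewrite dx.
  suff -> : (Phi @: S :&: <[x]> = 0)%VS by rewrite dimv0 addn0.
  apply/eqP; rewrite -subv0; apply/subvP => y; rewrite memv_cap memv0.
  case/andP => /memv_imgP [u uS ->] /vlineP [a]; rewrite lin_ofE => ha.
  case: (eqVneq a 0) => [a0|an0]; first by rewrite ha a0 scale0r.
  by move: hx0; rewrite (eig0 uS an0 ha) eqxx.
have e5 : \dim (Theta @: K0 + <[x]>) = (\dim (Theta @: K0) + 1)%N.
  have := dimv_sum_cap (Theta @: K0) <[x]>; rewrite dx.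
  suff -> : (Theta @: K0 :&: <[x]> = 0)%VS by rewrite dimv0 addn0.
  apply/eqP; rewrite -subv0; apply/subvP => y; rewrite memv_cap memv0.
  case/andP => /memv_imgP [v vK0 ->] /vlineP [a]; rewrite lin_ofE /= => ha.
  have [vS _ _] := memK0 v vK0.
  have := hSA vS z; rewrite ha sE szx mulrN1 => /eqP; rewrite oppr_eq0 => /eqP a0.
  by rewrite ?ha a0 scale0r.
have hort : (\dim (Phi @: S + <[x]>) + \dim (Theta @: K0 + <[x]>) <= \dim {:V})%N.
  apply: (ortho_dim hb halt hnd) => a b.
  case/memv_addP => y /memv_imgP [u uS ->] [a1 /vlineP [al ->] ->].
  case/memv_addP => l /memv_imgP [v vK0 ->] [b1 /vlineP [be ->] ->].
  have [vS vx _] := memK0 v vK0.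
  have k1 : s (u x) (v z) = 0 by rewrite -sadj // key.
  have k2 : s (u x) x = 0 by rewrite skw (hSA uS) oppr0.
  have k3 : s x (v z) = 0 by rewrite sadj // vx sE.
  by rewrite !lin_ofE !sE k1 k2 k3 halt !mulr0 !addr0.
move: e1 e2 e3 hIH hort e4 e5; rewrite hV.
set a1 := \dim S; set a2 := \dim K; set a3 := \dim K0; set a4 := \dim (Phi @: S).
set a5 := \dim (Psi @: K); set a6 := \dim (Theta @: K0).
set a7 := \dim (Phi @: S + <[x]>); set a8 := \dim (Theta @: K0 + <[x]>).
rewrite subSS subn0; nia.
Qed.

End XZ.
End Step.


Lemma main_gen (F : fieldType) (n : nat) : forall (V : vectType F) (s : V -> V -> F)
  (S : {vspace 'End(V)}), card_at_least F (2 * n - 1) ->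
  \dim (fullv : {vspace V}) = (2 * n)%N -> symplectic_form s ->
  (forall u, u \in S -> s_alternating s u) ->
  (forall u, u \in S -> trivial_spectrum u) -> (\dim S <= n * (n - 1))%N.
Proof.
elim: n => [|m IH] V s S hF hV hs hSA hST.
  apply: (leq_trans (dimvS (subvf S))); rewrite dimvf.
  change (dim V * dim V <= 0 * (0 - 1))%N; by rewrite -dimvf hV.
pose x := vpick (fullv : {vspace V}).
have hx0 : x != 0.
  rewrite vpick0; apply/eqP => h; move: hV; rewrite h dimv0 => /eqP.
  by rewrite eq_sym muln_eq0.
have [y hy] : exists y, s x y != 0.
  apply: NNPP => hn; move/eqP: hx0; apply; apply: (proj2 hs) => y.
  apply/eqP; apply: NNPP => hy; apply: hn; exists y; exact/negP.
pose z := (s x y)^-1 *: y.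
have hxz : s x z = 1 by rewrite (sZr (proj1 (proj1 hs))) mulVf.
exact: (step hF hV hs hSA hST IH hx0 hxz).
Qed.

Unset Implicit Arguments.

Theorem theorem2 (F : fieldType) (n : nat) (hF : card_at_least F (2 * n - 1))
  (V : vectType F) (hV : \dim (fullv : {vspace V}) = (2 * n)%N)
  (s : V -> V -> F) (hs : symplectic_form s)
  (S : {vspace 'End(V)})
  (hSA : forall u : 'End(V), u \in S -> s_alternating s u)
  (hST : forall u : 'End(V), u \in S -> trivial_spectrum u) :
  (\dim S <= n * (n - 1))%N.
Proof. exact: (main_gen hF hV hs hSA hST). Qed.
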